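(* Let $k\ge2$. Then $\mathcal J_k\widehat{\mathcal L}_{k-1}=\widehat{\mathcal L}_k\mathcal J_k$ as operators $\mathbb R^{V^{k-1}}\to\mathbb R^{V^k}$.
   Context: $V$ is a finite set with symmetric non-negative weights $c_{xy}=c_{yx}\ge0$, $\alpha=(\alpha_x)$ positive. For $m\ge1$, the lookdown generator acts on $\varphi:V^m\to\mathbb R$ by $$\widehat{\mathcal L}_m\varphi(\mathbf x)=\sum_{x,y\in V}c_{xy}\sum_{i=1}^m\delta_{x,x_i}\Big(\alpha_y+2\sum_{j=1}^{i-1}\delta_{y,x_j}\Big)(\varphi(\mathbf x_i^y)-\varphi(\mathbf x)),$$ where $\mathbf x_i^y$ is $\mathbf x$ with its $i$-th coordinate replaced by $y$. $\mathcal J_k\varphi(x_1,\dots,x_k)=\varphi(x_1,\dots,x_{k-1})$. *)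

(* Defs.v *)
From HB Require Import structures.
From mathcomp Require Import all_boot all_order all_algebra.
From mathcomp Require Import reals.
Set Implicit Arguments. Unset Strict Implicit. Unset Printing Implicit Defensive.
Import Order.TTheory GRing.Theory Num.Theory.
Local Open Scope ring_scope.

(* Points of V^m are functions 'I_m -> V; coordinates are 0-indexed,
   so paper's coordinate i (1..m) is our i-1. *)

Definition upd (V : eqType) (m : nat) (xs : 'I_m -> V) (i : 'I_m) (y : V)
  : 'I_m -> V := fun j => if j == i then y else xs j.

Definition lookdown (R : realType) (V : finType) (c : V -> V -> R)
  (alpha : V -> R) (m : nat) (phi : ('I_m -> V) -> R) : ('I_m -> V) -> R :=
  fun xs =>
    \sum_(x : V) \sum_(y : V) c x y *
      \sum_(i < m) ((x == xs i)%:R *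
         (alpha y + 2 * \sum_(j < m | (j < i)%N) (y == xs j)%:R) *
         (phi (upd xs i y) - phi xs)).

Definition Jop (R : Type) (V : Type) (k : nat) (phi : ('I_k.-1 -> V) -> R)
  : ('I_k -> V) -> R :=
  fun xs => phi (fun j : 'I_k.-1 => xs (widen_ord (leq_pred k) j)).

(* Main.v *)
Require Import Defs.
From HB Require Import structures.
From mathcomp Require Import all_boot all_order all_algebra.
From mathcomp Require Import reals.
From Stdlib Require Import FunctionalExtensionality.
Import Order.TTheory GRing.Theory Num.Theory.
Local Open Scope ring_scope.

Theorem lemmaA3 (R : realType) (V : finType) (c : V -> V -> R) (alpha : V -> R)
  (c_sym : forall x y, c x y = c y x)
  (c_ge0 : forall x y, 0 <= c x y)
  (alpha_gt0 : forall x, 0 < alpha x)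
  (k : nat) (hk : (2 <= k)%N)
  (phi : ('I_k.-1 -> V) -> R) (xs : 'I_k -> V) :
  Jop (lookdown c alpha phi) xs = lookdown c alpha (Jop phi) xs.
Proof.
case: k hk phi xs => [|[|n]] // _ phi xs.
rewrite /Jop /lookdown /=.
apply: eq_bigr => x _; apply: eq_bigr => y _; congr (_ * _).
rewrite [RHS]big_ord_recr /=.
have -> : (fun j : 'I_n.+1 => upd xs ord_max y (widen_ord (leq_pred n.+2) j))
   = (fun j => xs (widen_ord (leq_pred n.+2) j)).
  apply: functional_extensionality => j; rewrite /upd.
  have -> : (widen_ord (leq_pred n.+2) j == ord_max) = false.
    apply/negbTE; rewrite -val_eqE /= neq_ltn ltn_ord //.
  by [].
rewrite subrr mulr0 addr0.
apply: eq_bigr => i _.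
have -> : widen_ord (leqnSn n.+1) i = widen_ord (leq_pred n.+2) i by apply: val_inj.
rewrite (big_mkcond (fun j : 'I_n.+2 => (j < _)%N)) (big_mkcond (fun j : 'I_n.+1 => (j < _)%N)).
rewrite [in RHS]big_ord_recr /= [in RHS](ifN (b:=(n.+1 < i)%N)) ?addr0; last first.
  by rewrite -leqNgt; exact: ltnW (ltn_ord i).
congr (_ * (_ + 2 * _) * (phi _ - _)).
  apply: eq_bigr => j _.
  by have -> : widen_ord (leqnSn n.+1) j = widen_ord (leq_pred n.+2) j by apply: val_inj.
Qed.
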